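(* Let $A\subset\mathbb{R}^d$ be a finite set of sites in general position. For all $r\in[0,\infty)$ and $k\in\mathbb{N}$: (1) the vertex sets of $\textnormal{S-Rhomb}_{r,k}$ and $\textnormal{S-Del}_{r,k}$ are equal (identifying the vertex $(\sum_{a\in v}a,-|v|)$ of the rhomboid tiling with the subset $v\subseteq A$); (2) the vertices of each sliced rhomboid in $\textnormal{S-Rhomb}_{r,k}$ span a simplex in $\textnormal{S-Del}_{r,k}$; (3) the vertices of each simplex in $\textnormal{S-Del}_{r,k}$ are contained in a sliced rhomboid of $\textnormal{S-Rhomb}_{r,k}$.
   Context: $\mathbb{N}=\{1,2,\dots\}$. Simplicial side: for $\tilde A\subseteq A$ let $\mathrm{Ball}_r(\tilde A)=\{b: \|b-\tilde a\|\le r\ \forall\tilde a\in\tilde A\}$ and for $|\tilde A|=k$ let $\mathrm{Vor}(\tilde A)=\{b\in\mathbb{R}^d: \|b-\tilde a\|\le\|b-a\|\ \forall\tilde a\in\tilde A, a\in A\setminus\tilde A\}$. Let $\mathrm{Del}^{+}_{r,k}$ be the abstract simplicial complex whose vertices are subsets $\tilde A\subseteq A$ with $|\tilde A|\in\{k,k+1\}$ and $\mathrm{Ball}_r(\tilde A)\cap\mathrm{Vor}(\tilde A)\neq\emptyset$, and whose simplices are the sets $\sigma$ of such subsets with $\bigcap_{\tilde A\in\sigma}(\mathrm{Ball}_r(\tilde A)\cap\mathrm{Vor}(\tilde A))\neq\emptyset$; $\textnormal{S-Del}_{r,k}=\bigcup_{i\ge k}\mathrm{Del}^{+}_{r,i}$.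 Rhomboid side: a $(d-1)$-sphere $S\subset\mathbb{R}^d$ partitions $A=A_{in}\sqcup A_{on}\sqcup A_{out}$ (sites inside, on, outside $S$). The combinatorial rhomboid of $S$ is $\rho_S=\{A_{in}\cup Q: Q\subseteq A_{on}\}$; its elements are (combinatorial) vertices. A vertex $v=\{a_1,\dots,a_m\}$ is embedded as the point $(\sum_i a_i,-m)\in\mathbb{R}^{d+1}$ ($m$ is its depth), and the geometric rhomboid of $S$ is the convex hull of its embedded vertices. The rhomboid tiling $\mathrm{Rhomb}$ is the polyhedral complex of all rhomboids $\rho_S$, $S$ ranging over spheres. For a rhomboid $\rho$, $r_\rho$ is the infimum of radii of spheres $S$ with $\rho_S=\rho$. The sliced rhomboid tiling $\textnormal{S-Rhomb}$ is the polyhedral complex obtained by cutting every rhomboid along the hyperplanes $\{x_{d+1}=-j\}$, $j=0,\dots,|A|$; its cells (sliced rhomboids) are the intersections of rhomboids with these hyperplanes and with the slabs $\{j\le -x_{d+1}\le j+1\}$. For a sliced rhomboid $\rho$, $k_\rho$ is the minimum depth of its vertices and $r_\rho:=r_{\rho'}$ where $\rho'$ is the smallest-dimensional rhomboid containing $\rho$. $\textnormal{S-Rhomb}_{r,k}=\{\rho\in\textnormal{S-Rhomb}: r_\rho\le r, k_\rho\ge k\}$. *)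

(* Defs.v *)
From HB Require Import structures.
From mathcomp Require Import all_boot all_order all_algebra.
From mathcomp Require Import boolp classical_sets reals.
Set Implicit Arguments.
Unset Strict Implicit.
Unset Printing Implicit Defensive.
Import Order.TTheory GRing.Theory Num.Theory.
Local Open Scope ring_scope.

Definition enorm (R : realType) (d : nat) (x : 'rV[R]_d) : R :=
  Num.sqrt (\sum_(i < d) x ord0 i ^+ 2).

Section Defs.
Variables (R : realType) (d n : nat) (A : 'I_n -> 'rV[R]_d).
(* The site set is {A i | i : 'I_n}; subsets of sites are {set 'I_n}. *)

Definition aff_indep (S : {set 'I_n}) : Prop :=
  forall lam : 'I_n -> R,
    \sum_(i in S) lam i = 0 -> \sum_(i in S) lam i *: A i = 0 ->
    forall i, i \in S -> lam i = 0.

Definition general_position : Prop :=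
  (forall S : {set 'I_n}, (#|S| <= d.+1)%N -> aff_indep S) /\
  (forall S : {set 'I_n}, #|S| = d.+2 ->
     ~ exists (z : 'rV[R]_d) (s : R), forall i, i \in S -> enorm (A i - z) = s).

Definition Ball (r : R) (T : {set 'I_n}) (b : 'rV[R]_d) : Prop :=
  forall i, i \in T -> enorm (b - A i) <= r.

Definition Vor (T : {set 'I_n}) (b : 'rV[R]_d) : Prop :=
  forall i j, i \in T -> j \notin T -> enorm (b - A i) <= enorm (b - A j).

Definition BallVor (r : R) (T : {set 'I_n}) (b : 'rV[R]_d) : Prop :=
  Ball r T b /\ Vor T b.

Definition delp_vertex (r : R) (i : nat) (T : {set 'I_n}) : Prop :=
  ((#|T| == i) || (#|T| == i.+1)) /\ exists b, BallVor r T b.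

Definition delp_simplex (r : R) (i : nat) (sigma : {set {set 'I_n}}) : Prop :=
  (0 < #|sigma|)%N /\
  (forall T, T \in sigma -> delp_vertex r i T) /\
  exists b, forall T, T \in sigma -> BallVor r T b.

(* S-Del_{r,k} = union over i >= k of Del^+_{r,i} *)
Definition sdel_vertex (r : R) (k : nat) (T : {set 'I_n}) : Prop :=
  exists i, (k <= i)%N /\ delp_vertex r i T.

Definition sdel_simplex (r : R) (k : nat) (sigma : {set {set 'I_n}}) : Prop :=
  exists i, (k <= i)%N /\ delp_simplex r i sigma.

Definition A_in (z : 'rV[R]_d) (s : R) : {set 'I_n} :=
  [set i | enorm (A i - z) < s].
Definition A_on (z : 'rV[R]_d) (s : R) : {set 'I_n} :=
  [set i | enorm (A i - z) == s].

Definition rhoS (z : 'rV[R]_d) (s : R) : {set {set 'I_n}} :=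
  [set A_in z s :|: Q | Q in powerset (A_on z s)].

Definition is_rhomb (rho : {set {set 'I_n}}) : Prop :=
  exists z s, 0 < s /\ rhoS z s = rho.

Definition rrad (rho : {set {set 'I_n}}) : R :=
  inf [set s : R | exists z, 0 < s /\ rhoS z s = rho].

Definition embed (v : {set 'I_n}) : 'rV[R]_(d + 1) :=
  row_mx (\sum_(i in v) A i) (\row_(j < 1) - (#|v|%:R)).

Definition last_coord (x : 'rV[R]_(d + 1)) : R := x ord0 (rshift d ord0).

Definition conv (rho : {set {set 'I_n}}) (x : 'rV[R]_(d + 1)) : Prop :=
  exists lam : {set 'I_n} -> R,
    (forall v, v \in rho -> 0 <= lam v) /\
    \sum_(v in rho) lam v = 1 /\
    x = \sum_(v in rho) lam v *: embed v.

(* sliced rhomboid: rhomboid rho cut by the hyperplane x_{d+1} = -j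
   (slab = false) or by the slab j <= -x_{d+1} <= j+1 (slab = true) *)
Definition cellpts (rho : {set {set 'I_n}}) (j : nat) (slab : bool)
  (x : 'rV[R]_(d + 1)) : Prop :=
  conv rho x /\
  (if slab then (j%:R <= - last_coord x) /\ (- last_coord x <= j.+1%:R)
   else - last_coord x = j%:R).

Definition extreme (C : 'rV[R]_(d + 1) -> Prop) (p : 'rV[R]_(d + 1)) : Prop :=
  C p /\ forall x y (t : R), C x -> C y -> 0 < t -> t < 1 ->
    p = t *: x + (1 - t) *: y -> x = y.

Definition cellV (rho : {set {set 'I_n}}) (j : nat) (slab : bool)
  : {set {set 'I_n}} :=
  [set v in rho | `[< extreme (cellpts rho j slab) (embed v) >] ].

Definition is_cell (rho : {set {set 'I_n}}) (j : nat) (slab : bool) : Prop :=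
  is_rhomb rho /\ (j <= n)%N /\ exists x, cellpts rho j slab x.

Definition smallest_rhomb (rho : {set {set 'I_n}}) (j : nat) (slab : bool)
  (rho' : {set {set 'I_n}}) : Prop :=
  is_rhomb rho' /\
  (forall x, cellpts rho j slab x -> conv rho' x) /\
  (forall rho'', is_rhomb rho'' ->
     (forall x, cellpts rho j slab x -> conv rho'' x) ->
     (#|rho'| <= #|rho''|)%N).

Definition in_SRhomb (r : R) (k : nat) (rho : {set {set 'I_n}}) (j : nat)
  (slab : bool) : Prop :=
  is_cell rho j slab /\
  (exists rho', smallest_rhomb rho j slab rho' /\ rrad rho' <= r) /\
  (forall v, v \in cellV rho j slab -> (k <= #|v|)%N).

Definition srhomb_vertex (r : R) (k : nat) (v : {set 'I_n}) : Prop :=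
  exists rho j slab, in_SRhomb r k rho j slab /\ v \in cellV rho j slab.

End Defs.

(* Main.v *)
Require Import Defs.
From HB Require Import structures.
From mathcomp Require Import all_boot all_order all_algebra.
From mathcomp Require Import boolp classical_sets reals.
From mathcomp Require Import topology normedtype.
From mathcomp Require Import ring lra zify.
From mathcomp Require Import fintype finset bigop.
Import Order.TTheory GRing.Theory Num.Theory.
Import numFieldNormedType.Exports.
Local Open Scope classical_set_scope.
Local Open Scope ring_scope.
Set Implicit Arguments.
Unset Strict Implicit.
Unset Printing Implicit Defensive.
Section Basics.
Variables (R : realType) (d n : nat) (A : 'I_n -> 'rV[R]_d).
Implicit Types (u v w z : 'rV[R]_d) (s : R).

Definition dot (u v : 'rV[R]_d) : R := \sum_(c < d) u 0 c * v 0 c.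
Definition sq (u : 'rV[R]_d) : R := dot u u.

Lemma sq_ge0 u : 0 <= sq u.
Proof. by apply: sumr_ge0 => c _; rewrite -expr2 sqr_ge0. Qed.

Lemma enorm_ge0 u : 0 <= enorm u.
Proof. exact: sqrtr_ge0. Qed.

Lemma enorm_sq u : enorm u ^+ 2 = sq u.
Proof.
rewrite /enorm sqr_sqrtr; last by apply: sumr_ge0 => c _; exact: sqr_ge0.
by apply: eq_bigr => c _; rewrite expr2.
Qed.

Lemma enormE u : enorm u = Num.sqrt (sq u).
Proof. by rewrite /enorm /sq /dot; congr Num.sqrt; apply: eq_bigr => c _; rewrite expr2. Qed.

Lemma le_enorm u v : (enorm u <= enorm v) = (sq u <= sq v).
Proof. by rewrite !enormE ler_sqrt // sq_ge0. Qed.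

Lemma lt_enorm u v : (enorm u < enorm v) = (sq u < sq v).
Proof. by rewrite ltNge le_enorm -ltNge. Qed.

Lemma le_enorm_r u s : 0 <= s -> (enorm u <= s) = (sq u <= s ^+ 2).
Proof.
move=> s0; rewrite enormE -{1}(ger0_norm s0) -sqrtr_sqr ler_sqrt //.
exact: sqr_ge0.
Qed.

Lemma lt_enorm_r u s : 0 <= s -> (enorm u < s) = (sq u < s ^+ 2).
Proof.
move=> s0; rewrite enormE -{1}(ger0_norm s0) -sqrtr_sqr.
by rewrite ltNge ler_sqrt ?sq_ge0 // -ltNge.
Qed.

Lemma le_enorm_l u s : 0 <= s -> (s <= enorm u) = (s ^+ 2 <= sq u).
Proof. by move=> s0; rewrite leNgt lt_enorm_r // -leNgt. Qed.

Lemma eq_enorm_r u s : 0 <= s -> (enorm u == s) = (sq u == s ^+ 2).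
Proof.
by move=> s0; rewrite eq_le le_enorm_r // le_enorm_l // -eq_le.
Qed.

Lemma dotDl u v w : dot (u + v) w = dot u w + dot v w.
Proof. by rewrite /dot -big_split; apply: eq_bigr => c _; rewrite mxE mulrDl. Qed.
Lemma dotNl u w : dot (- u) w = - dot u w.
Proof. by rewrite /dot -sumrN; apply: eq_bigr => c _; rewrite mxE mulNr. Qed.
Lemma dotBl u v w : dot (u - v) w = dot u w - dot v w.
Proof. by rewrite dotDl dotNl. Qed.
Lemma dotC u v : dot u v = dot v u.
Proof. by apply: eq_bigr => c _; rewrite mulrC. Qed.
Lemma dotDr u v w : dot w (u + v) = dot w u + dot w v.
Proof. by rewrite dotC dotDl !(dotC w). Qed.
Lemma dotBr u v w : dot w (u - v) = dot w u - dot w v.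
Proof. by rewrite dotC dotBl !(dotC w). Qed.
Lemma dotZl (a : R) u w : dot (a *: u) w = a * dot u w.
Proof. by rewrite /dot mulr_sumr; apply: eq_bigr => c _; rewrite mxE mulrA. Qed.
Lemma dotZr (a : R) u w : dot w (a *: u) = a * dot w u.
Proof. by rewrite dotC dotZl dotC. Qed.
Lemma dot0l w : dot 0 w = 0.
Proof. by rewrite /dot big1 // => c _; rewrite mxE mul0r. Qed.
Lemma dot_suml (I : finType) (P : pred I) (F : I -> 'rV[R]_d) w :
  dot (\sum_(i | P i) F i) w = \sum_(i | P i) dot (F i) w.
Proof.
elim/big_rec2: _ => [|i x y _ IH]; first exact: dot0l.
by rewrite dotDl IH.
Qed.

Lemma sqB u z : sq (u - z) = sq u - 2 * dot u z + sq z.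
Proof.
rewrite /sq dotBl !dotBr (dotC z u); ring.
Qed.

Lemma sqBC u w : sq (u - w) = sq (w - u).
Proof. by rewrite !sqB (dotC w u); ring. Qed.

End Basics.
Section Power.
Variables (R : realType) (d n : nat) (A : 'I_n -> 'rV[R]_d).
Implicit Types (u w z : 'rV[R]_d) (s : R) (T U W V : {set 'I_n}).

Lemma mem_A_in z s i : (i \in A_in A z s) = (enorm (A i - z) < s).
Proof. by rewrite inE. Qed.
Lemma mem_A_on z s i : (i \in A_on A z s) = (enorm (A i - z) == s).
Proof. by rewrite inE. Qed.

Lemma mem_rhoS z s W :
  (W \in rhoS A z s) = (A_in A z s \subset W) && (W \subset A_in A z s :|: A_on A z s).
Proof.
apply/imsetP/andP => [[Q]|[h1 h2]].
  rewrite inE => hQ ->; split; first exact: subsetUl.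
  exact: setUS.
exists (W :\: A_in A z s); first rewrite inE.
  apply/subsetP => x; rewrite in_setD => /andP[xI xW].
  by move/subsetP: h2 => /(_ x xW); rewrite in_setU (negbTE xI).
apply/setP => x; rewrite in_setU in_setD; case xI: (x \in A_in A z s) => //=.
by move/subsetP: h1 => /(_ x xI).
Qed.

Definition pw z s i := sq (A i - z) - s ^+ 2.
Definition PW z s W := \sum_i (i \in W)%:R * pw z s i.
Definition LW W := \sum_i (i \in W)%:R * sq (A i).
Definition XW W := \sum_(i in W) A i.
Definition mW W : R := #|W|%:R.

Lemma pw_neg z s i : 0 <= s -> (pw z s i < 0) = (i \in A_in A z s).
Proof. by move=> s0; rewrite mem_A_in lt_enorm_r // /pw subr_lt0. Qed.
Lemma pw_eq0 z s i : 0 <= s -> (pw z s i == 0) = (i \in A_on A z s).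
Proof. by move=> s0; rewrite mem_A_on eq_enorm_r // /pw subr_eq0. Qed.

Lemma PW_diff z s W :
  PW z s W - PW z s (A_in A z s) =
  \sum_i ((i \in W)%:R - (i \in A_in A z s)%:R) * pw z s i.
Proof. by rewrite /PW -sumrB; apply: eq_bigr => i _; rewrite mulrBl. Qed.

Lemma PW_term_ge0 z s W i : 0 <= s ->
  0 <= ((i \in W)%:R - (i \in A_in A z s)%:R) * pw z s i.
Proof.
move=> s0; have := pw_neg z i s0.
case: (i \in W); case: (i \in A_in A z s) => /= h.
- by rewrite subrr mul0r.
- by rewrite subr0 mul1r leNgt h.
- by rewrite sub0r mulN1r oppr_ge0 ltW // h.
- by rewrite subrr mul0r.
Qed.

Lemma PW_min z s W : 0 <= s -> PW z s (A_in A z s) <= PW z s W.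
Proof.
move=> s0; rewrite -subr_ge0 PW_diff; apply: sumr_ge0 => i _.
exact: PW_term_ge0.
Qed.

Lemma PW_rhoS z s W : 0 <= s -> W \in rhoS A z s -> PW z s W = PW z s (A_in A z s).
Proof.
move=> s0; rewrite mem_rhoS => /andP[h1 h2]; apply/eqP; rewrite -subr_eq0 PW_diff.
apply/eqP/big1 => i _.
case iI: (i \in A_in A z s); first by rewrite (subsetP h1 i iI) subrr mul0r.
case iW: (i \in W); last by rewrite subrr mul0r.
have : i \in A_on A z s by move/subsetP: h2 => /(_ i iW); rewrite inE iI.
by rewrite -pw_eq0 // => /eqP ->; rewrite mulr0.
Qed.

Lemma PW_eq_rhoS z s W : 0 <= s -> PW z s W = PW z s (A_in A z s) -> W \in rhoS A z s.
Proof.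
move=> s0 /eqP; rewrite -subr_eq0 PW_diff psumr_eq0; last first.
  by move=> i _; exact: PW_term_ge0.
move=> /allP h.
have h' : forall i, ((i \in W)%:R - (i \in A_in A z s)%:R) * pw z s i = 0 :> R.
  by move=> i; apply/eqP; apply: h; rewrite mem_index_enum.
rewrite mem_rhoS; apply/andP; split.
  apply/subsetP => i iI; move: (h' i); rewrite iI; case: (i \in W) => //.
  move=> /eqP; rewrite sub0r mulN1r oppr_eq0 => /eqP.
  by move: (pw_neg z i s0); rewrite iI => /[swap] -> ; rewrite ltxx.
apply/subsetP => i iW; rewrite inE; case iI: (i \in A_in A z s) => //=.
move: (h' i); rewrite iW iI subr0 mul1r => /eqP.
by rewrite pw_eq0.
Qed.

Lemma PW_decomp z s W :
  PW z s W = LW W - 2 * dot (XW W) z + mW W * (sq z - s ^+ 2).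
Proof.
rewrite /PW /LW /XW /mW /pw.
have e1 : \sum_i (i \in W)%:R * (sq (A i - z) - s ^+ 2) =
  \sum_i (i \in W)%:R * sq (A i) - 2 * \sum_i ((i \in W)%:R * dot (A i) z)
          + \sum_i (i \in W)%:R * (sq z - s ^+ 2).
  rewrite mulr_sumr -sumrB -big_split /=.
  by apply: eq_bigr => i _; rewrite sqB; ring.
rewrite e1; congr (_ - _ + _).
  congr (_ * _); rewrite dot_suml [in RHS]big_mkcond /=; apply: eq_bigr => i _.
  by case: (i \in W); rewrite ?mul1r ?mul0r.
rewrite -mulr_suml; congr (_ * _).
rewrite -sum1_card natr_sum [in RHS]big_mkcond /=; apply: eq_bigr => i _.
by case: (i \in W).
Qed.

Lemma embed_lE W c : embed A W 0 (lshift 1 c) = XW W 0 c.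
Proof. by rewrite /embed row_mxEl. Qed.
Lemma embed_rE W : embed A W 0 (rshift d ord0) = - mW W.
Proof. by rewrite /embed row_mxEr mxE. Qed.

Lemma conv_decomp (rho : {set {set 'I_n}}) (lam : {set 'I_n} -> R) V :
  embed A V = \sum_(W in rho) lam W *: embed A W ->
  XW V = \sum_(W in rho) lam W *: XW W /\ mW V = \sum_(W in rho) lam W * mW W.
Proof.
move=> h; split.
  apply/rowP => c; rewrite -embed_lE h !summxE.
  by apply: eq_bigr => W _; rewrite [LHS]mxE [RHS]mxE embed_lE.
apply: oppr_inj; rewrite -embed_rE h summxE -sumrN.
by apply: eq_bigr => W _; rewrite [LHS]mxE embed_rE mulrN.
Qed.

End Power.
Section Tiling.
Variables (R : realType) (d n : nat) (A : 'I_n -> 'rV[R]_d).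
Implicit Types (u w z : 'rV[R]_d) (s : R) (T U W V : {set 'I_n}).

Lemma PW_comb (rho : {set {set 'I_n}}) (lam : {set 'I_n} -> R) V z s :
  \sum_(W in rho) lam W = 1 ->
  embed A V = \sum_(W in rho) lam W *: embed A W ->
  \sum_(W in rho) lam W * PW A z s W =
  \sum_(W in rho) lam W * LW A W - LW A V + PW A z s V.
Proof.
move=> h1 h; have [hX hm] := conv_decomp h.
have e : \sum_(W in rho) lam W * PW A z s W =
  \sum_(W in rho) lam W * LW A W - 2 * \sum_(W in rho) (lam W * dot (XW A W) z)
  + (\sum_(W in rho) lam W * mW R W) * (sq z - s ^+ 2).
  rewrite mulr_sumr mulr_suml -sumrB -big_split /=.
  by apply: eq_bigr => W _; rewrite PW_decomp; ring.
rewrite e -hm PW_decomp hX dot_suml.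
have -> : \sum_(W in rho) dot (lam W *: XW A W) z = \sum_(W in rho) lam W * dot (XW A W) z.
  by apply: eq_bigr => W _; rewrite dotZl.
ring.
Qed.

Lemma conv_rhoS_mem z s z' s' V : 0 <= s -> 0 <= s' ->
  V \in rhoS A z s -> conv A (rhoS A z' s') (embed A V) -> V \in rhoS A z' s'.
Proof.
move=> s0 s0' hV [lam [hl0 [hl1 heq]]].
have c1 := PW_comb z s hl1 heq.
have c2 := PW_comb z' s' hl1 heq.
have e2 : \sum_(W in rhoS A z' s') lam W * PW A z' s' W = PW A z' s' (A_in A z' s').
  rewrite (eq_bigr (fun W => lam W * PW A z' s' (A_in A z' s'))); last first.
    by move=> W hW; rewrite PW_rhoS.
  by rewrite -mulr_suml hl1 mul1r.
have i1 : PW A z s V <= \sum_(W in rhoS A z' s') lam W * PW A z s W.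
  rewrite (PW_rhoS s0 hV).
  have -> : PW A z s (A_in A z s) = \sum_(W in rhoS A z' s') lam W * PW A z s (A_in A z s).
    by rewrite -mulr_suml hl1 mul1r.
  apply: ler_sum => W hW; apply: ler_wpM2l; first exact: hl0.
  exact: PW_min.
apply: (PW_eq_rhoS s0'); apply/eqP; rewrite eq_le PW_min // andbT.
rewrite c1 in i1; rewrite c2 in e2; lra.
Qed.

End Tiling.
Section Affine.
Variables (R : realType) (d n : nat) (A : 'I_n -> 'rV[R]_d).

Lemma aff_solve (S : {set 'I_n}) (f : 'I_n -> R) : aff_indep A S ->
  exists (g : 'rV[R]_d) (c : R), forall i, i \in S -> dot (A i) g + c = f i.
Proof.
move=> hS.
pose MA : 'M[R]_(n, d) := \matrix_(i, j) (if i \in S then A i 0 j else 0).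
pose M1 : 'M[R]_(n, 1) := \matrix_(i, j) (if i \in S then 1 else 0).
pose ME : 'M[R]_(n, n) := \matrix_(i, j) (if i \in S then 0 else (i == j)%:R).
pose M := row_mx (row_mx MA M1) ME.
have key : forall v : 'rV[R]_n, v *m M = 0 -> v = 0.
  move=> v; rewrite !mul_mx_row => /eqP; rewrite !row_mx_eq0 => /andP[/andP[/eqP hA /eqP h1] /eqP hE].
  have hout : forall j, j \notin S -> v 0 j = 0.
    move=> j hj; transitivity ((v *m ME) 0 j); last by rewrite hE mxE.
    rewrite mxE (bigD1 j) //= mxE (negbTE hj) eqxx mulr1 big1 ?addr0 // => i hij.
    by rewrite mxE; case: (i \in S); rewrite ?mulr0 // (negbTE hij) mulr0.
  have hin := hS (fun i => v 0 i).
  have hin' : forall i, i \in S -> v 0 i = 0.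
    apply: hin.
      transitivity ((v *m M1) 0 0); last by rewrite h1 mxE.
      rewrite mxE big_mkcond /=; apply: eq_bigr => i _.
      by rewrite mxE; case: (i \in S); rewrite ?mulr1 ?mulr0.
    apply/rowP => c; transitivity ((v *m MA) 0 c); last by rewrite hA.
    rewrite mxE summxE big_mkcond /=; apply: eq_bigr => i _.
    by rewrite !mxE; case: (i \in S); rewrite ?mulr0.
  apply/rowP => i; rewrite mxE; case: (boolP (i \in S)) => hi.
    exact: hin'.
  exact: hout.
have hfree : row_free M.
  rewrite -kermx_eq0; apply/eqP/row_matrixP => i; rewrite row0.
  apply: key; rewrite -row_mul.
  have -> : kermx M *m M = 0 by apply/sub_kermxP.
  by rewrite row0.
have hfull : row_full M^T.
  by rewrite /row_full mxrank_tr; exact: hfree.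
have /submxP [x hx] := submx_full (\row_i f i) hfull.
set xA := lsubmx (lsubmx x); set x1 := rsubmx (lsubmx x); set xE := rsubmx x.
have ex : x = row_mx (row_mx xA x1) xE by rewrite /xA /x1 /xE !hsubmxK.
exists xA, (x1 0 0) => i hi.
have := congr1 (fun m : 'rV[R]_n => m 0 i) hx.
rewrite [in LHS]mxE => ->.
rewrite ex /M !tr_row_mx !mul_row_col !mxE.
have e3 : \sum_j xE 0 j * (ME^T) j i = 0.
  by apply: big1 => j _; rewrite !mxE hi mulr0.
rewrite e3 addr0 big_ord1 !mxE hi mulr1 /dot; congr (_ + _).
by apply: eq_bigr => c _; rewrite !mxE hi mulrC.
Qed.

End Affine.
Section Comb.
Variables (R : realType) (d n : nat) (A : 'I_n -> 'rV[R]_d).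

Lemma exists_sub_card (X : {set 'I_n}) q : (q <= #|X|)%N ->
  exists Q : {set 'I_n}, Q \subset X /\ #|Q| = q.
Proof.
elim: q => [|q IH] h; first by exists set0; rewrite sub0set cards0.
have [Q [hQ cQ]] := IH (ltnW h).
have : ~~ (X \subset Q).
  apply/negP => /subset_leq_card; rewrite cQ; lia.
case/subsetPn => x xX xQ.
exists (x |: Q); split; first by rewrite subUset sub1set xX hQ.
by rewrite cardsU1 xQ cQ.
Qed.

Lemma cosph_card (hgp : general_position A) (S : {set 'I_n}) z s :
  (forall i, i \in S -> enorm (A i - z) = s) -> (#|S| <= d.+1)%N.
Proof.
move=> hS; rewrite leqNgt; apply/negP => hlt.
have [Q [hQ cQ]] := exists_sub_card (X := S) (q := d.+2) hlt.
case: hgp => _ /(_ Q cQ); apply; exists z, s => i /(subsetP hQ); exact: hS.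
Qed.

Lemma cosph_aff (hgp : general_position A) (S : {set 'I_n}) z s :
  (forall i, i \in S -> enorm (A i - z) = s) -> aff_indep A S.
Proof. by move=> hS; case: (hgp) => h _; apply: h; exact: cosph_card hS. Qed.

Lemma on_aff (hgp : general_position A) z s : aff_indep A (A_on A z s).
Proof. by apply: (cosph_aff hgp (z := z) (s := s)) => i; rewrite inE => /eqP. Qed.

End Comb.
Section Extreme.
Variables (R : realType) (d n : nat) (A : 'I_n -> 'rV[R]_d).
Implicit Types (u w z : 'rV[R]_d) (s : R) (T U W V : {set 'I_n}).

Definition psi (g : 'rV[R]_d) (cc : R) (x : 'rV[R]_(d + 1)) : R :=
  \sum_(c < d) x 0 (lshift 1 c) * g 0 c - cc * x 0 (rshift d ord0).

Lemma psi_lin g cc a b x y : psi g cc (a *: x + b *: y) = a * psi g cc x + b * psi g cc y.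
Proof.
rewrite /psi.
have -> : \sum_(c < d) (a *: x + b *: y) 0 (lshift 1 c) * g 0 c =
  a * \sum_(c < d) x 0 (lshift 1 c) * g 0 c + b * \sum_(c < d) y 0 (lshift 1 c) * g 0 c.
  rewrite !mulr_sumr -big_split /=; apply: eq_bigr => c _; rewrite !mxE; ring.
rewrite !mxE; ring.
Qed.

Lemma XW_sum W : XW A W = \sum_i (i \in W)%:R *: A i.
Proof.
rewrite /XW big_mkcond /=; apply: eq_bigr => i _.
by case: (i \in W); rewrite ?scale1r ?scale0r.
Qed.

Lemma mW_sum W : mW R W = \sum_i (i \in W)%:R.
Proof.
rewrite /mW -sum1_card natr_sum [in LHS]big_mkcond /=; apply: eq_bigr => i _.
by case: (i \in W).
Qed.

Lemma psi_embed g cc W :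
  psi g cc (embed A W) = \sum_i (i \in W)%:R * (dot (A i) g + cc).
Proof.
rewrite /psi embed_rE.
have -> : \sum_(c < d) embed A W 0 (lshift 1 c) * g 0 c = dot (XW A W) g.
  by apply: eq_bigr => c _; rewrite embed_lE.
rewrite XW_sum mW_sum dot_suml mulrN opprK mulr_sumr -big_split /=.
by apply: eq_bigr => i _; rewrite dotZl; ring.
Qed.

Lemma psi_sum g cc (rho : {set {set 'I_n}}) (lam : {set 'I_n} -> R) :
  psi g cc (\sum_(W in rho) lam W *: embed A W) =
  \sum_(W in rho) lam W * psi g cc (embed A W).
Proof.
rewrite /psi summxE.
have -> : \sum_(c < d) (\sum_(W in rho) lam W *: embed A W) 0 (lshift 1 c) * g 0 c =
  \sum_(W in rho) lam W * \sum_(c < d) embed A W 0 (lshift 1 c) * g 0 c.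
  under eq_bigr do rewrite summxE mulr_suml.
  rewrite exchange_big /=; apply: eq_bigr => W _; rewrite mulr_sumr.
  by apply: eq_bigr => c _; rewrite mxE mulrA.
rewrite mulr_sumr -sumrB; apply: eq_bigr => W _; rewrite mxE; ring.
Qed.

Lemma rhoS_extreme (hgp : general_position A) z s V : 0 <= s ->
  V \in rhoS A z s -> extreme (conv A (rhoS A z s)) (embed A V).
Proof.
move=> s0 hV.
have [g [cc hgc]] := @aff_solve R d n A _ (fun i => if i \in V then 1 else -1) (@on_aff _ _ _ A hgp z s).
pose Psi W := psi g cc (embed A W).
have hdiff : forall W, W \in rhoS A z s ->
    Psi V - Psi W = \sum_i ((i \in V)%:R - (i \in W)%:R) * (dot (A i) g + cc).
  by move=> W _; rewrite /Psi !psi_embed -sumrB; apply: eq_bigr => i _; rewrite mulrBl.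
have hterm : forall W i, W \in rhoS A z s ->
    0 <= ((i \in V)%:R - (i \in W)%:R) * (dot (A i) g + cc) /\
    (((i \in V)%:R - (i \in W)%:R) * (dot (A i) g + cc) = 0 -> (i \in V) = (i \in W)).
  move=> W i hW; move: hV hW; rewrite !mem_rhoS => /andP[v1 v2] /andP[w1 w2].
  case: (boolP (i \in A_on A z s)) => hio.
    rewrite hgc //; case: (i \in V); case: (i \in W) => /=; split;
      rewrite ?subrr ?mul0r ?mulr1 ?mulrN1 //=; try lra.
  have hIV : (i \in V) = (i \in A_in A z s).
    apply/idP/idP => [iV|iI]; last exact: (subsetP v1).
    by move/subsetP: v2 => /(_ i iV); rewrite in_setU (negbTE hio) orbF.
  have hIW : (i \in W) = (i \in A_in A z s).
    apply/idP/idP => [iW|iI]; last exact: (subsetP w1).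
    by move/subsetP: w2 => /(_ i iW); rewrite in_setU (negbTE hio) orbF.
  by rewrite hIV hIW subrr mul0r.
have hle : forall W, W \in rhoS A z s -> Psi W <= Psi V.
  move=> W hW; rewrite -subr_ge0 hdiff //; apply: sumr_ge0 => i _.
  by case: (hterm W i hW).
have heqV : forall W, W \in rhoS A z s -> Psi W = Psi V -> W = V.
  move=> W hW /eqP; rewrite eq_sym -subr_eq0 hdiff // psumr_eq0; last first.
    by move=> i _; case: (hterm W i hW).
  move=> /allP h; apply/setP => i; symmetry.
  case: (hterm W i hW) => _; apply; apply/eqP; apply: h.
  by rewrite mem_index_enum.
have hconv : forall x, conv A (rhoS A z s) x -> psi g cc x <= Psi V /\
    (psi g cc x = Psi V -> x = embed A V).
  move=> x [lam [hl0 [hl1 ->]]]; rewrite psi_sum; split.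
    rewrite -[Psi V]mul1r -hl1 mulr_suml; apply: ler_sum => W hW.
    by apply: ler_wpM2l; [exact: hl0|exact: (hle W hW)].
  move=> /eqP; rewrite eq_sym -[Psi V]mul1r -hl1 mulr_suml -subr_eq0 -sumrB psumr_eq0; last first.
    move=> W hW; rewrite -mulrBr; apply: mulr_ge0; first exact: hl0.
    by rewrite subr_ge0; apply: (hle W hW).
  move=> /allP h.
  have hz : forall W, W \in rhoS A z s -> W != V -> lam W = 0.
    move=> W hW hWV; have := h W (mem_index_enum _); rewrite hW /= => /eqP.
    rewrite -mulrBr => /eqP; rewrite mulf_eq0 => /orP[/eqP //|].
    rewrite subr_eq0 => /eqP/esym/(heqV W hW) e; by rewrite e eqxx in hWV.
  rewrite (bigD1 V) //= big1 ?addr0; last first.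
    by move=> W /andP[hW hWV]; rewrite hz // scale0r.
  have : lam V = 1.
    by rewrite -hl1 (bigD1 V) //= big1 ?addr0 // => W /andP[hW hWV]; rewrite hz.
  by move=> ->; rewrite scale1r.
split.
  exists (fun W => (W == V)%:R); split; first by move=> W _; case: (W == V).
  split.
    by rewrite (bigD1 V) //= eqxx big1 ?addr0 // => W /andP[_ /negbTE ->].
  rewrite (bigD1 V) //= eqxx scale1r big1 ?addr0 // => W /andP[_ /negbTE ->].
  by rewrite scale0r.
move=> x y t hx hy t0 t1 hxy.
have [px ex] := hconv x hx; have [py ey] := hconv y hy.
have hp : t * psi g cc x + (1 - t) * psi g cc y = Psi V.
  by rewrite -psi_lin -hxy.
have e1 : psi g cc x = Psi V.
  apply/eqP; rewrite eq_le px /=; nra.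
have e2 : psi g cc y = Psi V.
  apply/eqP; rewrite eq_le py /=; nra.
by rewrite (ex e1) (ey e2).
Qed.

End Extreme.

Section Topo.
Variables (R : realType) (d : nat).

Lemma cont_sum (f : 'I_d -> 'rV[R]_d -> R) :
  (forall c, continuous (f c)) -> continuous (fun b => \sum_(c < d) f c b).
Proof.
move=> hf; rewrite /index_enum /=.
have : forall s : seq 'I_d, continuous (fun b => \sum_(c <- s) f c b).
  elim => [|c s IH].
    have -> : (fun b => \sum_(c <- [::]) f c b) = (fun=> 0) by apply: funext => b; rewrite big_nil.
    exact: cst_continuous.
  have -> : (fun b => \sum_(c0 <- c :: s) f c0 b) = (fun b => f c b + \sum_(c <- s) f c b).
    by apply: funext => b; rewrite big_cons.
  by move=> x; exact: (cvgD (hf c x) (IH x)).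
by apply.
Qed.

Lemma cont_sq (a : 'rV[R]_d) : continuous (fun b : 'rV[R]_d => sq (a - b)).
Proof.
rewrite /sq /dot.
apply: (@cont_sum (fun c b => (a - b) 0 c * (a - b) 0 c)) => c; intro x.
have h1 : continuous (fun b : 'rV[R]_d => (a - b) 0 c).
  move=> y; have -> : (fun b : 'rV[R]_d => (a - b) 0 c) = (fun b => a 0 c - b 0 c).
    by apply: funext => b; rewrite !mxE.
  exact: (cvgB (@cst_continuous _ _ (a 0 c) y) (@coord_continuous _ 1 d ord0 c y)).
exact: (cvgM (h1 x) (h1 x)).
Qed.

Lemma cluster_le (F : set_system 'rV[R]_d) (phi : 'rV[R]_d -> R) c p :
  continuous phi -> cluster F p -> F [set x | phi x <= c] -> phi p <= c.
Proof.
move=> hphi hp hF.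
have hcl : closed (phi @^-1` [set y | y <= c]).
  apply: preimage_closed; last exact: closed_le.
  by move=> x _; exact: hphi.
apply: hcl => B Bp; exact: hp hF Bp.
Qed.

End Topo.
Section Limit.
Variables (R : realType) (d n : nat) (A : 'I_n -> 'rV[R]_d).
Implicit Types (u w z : 'rV[R]_d) (s : R) (T U W V : {set 'I_n}).

Lemma A_in_rhoS z s : A_in A z s \in rhoS A z s.
Proof. by rewrite mem_rhoS subxx subsetUl. Qed.
Lemma A_inon_rhoS z s : A_in A z s :|: A_on A z s \in rhoS A z s.
Proof. by rewrite mem_rhoS subsetUl subxx. Qed.

Lemma rhoS_parts z s z' s' : rhoS A z s = rhoS A z' s' ->
  A_in A z s = A_in A z' s' /\ A_in A z s :|: A_on A z s = A_in A z' s' :|: A_on A z' s'.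
Proof.
move=> e; have h1 := A_in_rhoS z s; have h2 := A_in_rhoS z' s'.
have h3 := A_inon_rhoS z s; have h4 := A_inon_rhoS z' s'.
rewrite e in h1 h3; rewrite -e in h2 h4.
move: h1 h2 h3 h4; rewrite !mem_rhoS => /andP[a1 a2] /andP[b1 b2] /andP[c1 c2] /andP[d1 d2].
by split; apply/eqP; rewrite eqEsubset ?a1 ?b1 ?c2 ?d2.
Qed.

Lemma coord_le (x : 'rV[R]_d) c : x 0 c ^+ 2 <= sq x.
Proof.
rewrite /sq /dot (bigD1 c) //= -expr2 lerDl; apply: sumr_ge0 => i _.
by rewrite -expr2 sqr_ge0.
Qed.

Lemma rrad_ge0 (rho : {set {set 'I_n}}) : is_rhomb A rho -> 0 <= rrad A rho.
Proof.
move=> [z [s [s0 e]]]; apply: lb_le_inf; first by exists s, z.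
by move=> x [z' [x0 _]]; exact: ltW.
Qed.

Lemma limit_sphere z0 s0 r : 0 < s0 -> rrad A (rhoS A z0 s0) <= r ->
  exists b, forall V, V \in rhoS A z0 s0 -> BallVor A r V b.
Proof.
move=> s0p hr.
have r0 : 0 <= r by apply: le_trans hr; apply: rrad_ge0; exists z0, s0.
set rho := rhoS A z0 s0; set I := A_in A z0 s0; set U := I :|: A_on A z0 s0.
suff [b [hb1 hb2]] : exists b, (forall i j, i \in U -> j \notin I -> sq (A i - b) <= sq (A j - b))
    /\ (forall i, i \in U -> sq (A i - b) <= r ^+ 2).
  exists b => V; rewrite mem_rhoS -/I -/U => /andP[hIV hVU]; split.
    by move=> i iV; rewrite le_enorm_r // sqBC (hb2 i (subsetP hVU i iV)).
  move=> i j iV jV; rewrite le_enorm sqBC (sqBC b); apply: hb1; first exact: subsetP hVU i iV.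
  by apply: contra jV; exact: (subsetP hIV).
case: (set_0Vmem U) => [U0|[u uU]].
  by exists 0; split => i; rewrite U0 inE.
pose E := [set s | exists z, 0 < s /\ rhoS A z s = rho].
have Es0 : E s0 by exists z0.
have Elb : has_lbound E by exists 0 => x [z [x0 _]]; exact: ltW.
have hk : forall k : nat, exists zs : 'rV[R]_d * R,
    0 < zs.2 /\ rhoS A zs.1 zs.2 = rho /\ zs.2 < r + k.+1%:R^-1.
  move=> k; have : rrad A rho < r + k.+1%:R^-1.
    by apply: le_lt_trans hr _; rewrite ltrDl invr_gt0 ltr0n.
  case/(inf_lt (ex_intro _ s0 Es0)) => s [z [sp es]] slt.
  by exists (z, s).
have [f hf] := boolp.choice hk.
pose zk k := (f k).1; pose sk k := (f k).2.
have hprop : forall k, (forall i j, i \in U -> j \notin I -> sq (A i - zk k) <= sq (A j - zk k))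
    /\ (forall i, i \in U -> sq (A i - zk k) <= sk k ^+ 2) /\ sk k < r + k.+1%:R^-1.
  move=> k; have [sp [es slt]] := hf k.
  have [eI eU] := rhoS_parts es.
  have skp : 0 <= sk k by exact: ltW.
  have hU : forall i, i \in U -> sq (A i - zk k) <= sk k ^+ 2.
    move=> i iU; rewrite -le_enorm_r //.
    have : i \in A_in A (zk k) (sk k) :|: A_on A (zk k) (sk k) by rewrite eU.
    rewrite in_setU !inE => /orP[/ltW //|/eqP -> //].
  split; last by split.
  move=> i j iU jI.
  apply: le_trans (hU i iU) _; rewrite -le_enorm_l //.
  move: jI; rewrite /I -eI inE; rewrite -leNgt; done.
pose M := \sum_(c < d) `|A u 0 c| + (r + 1).
have Mb : forall k c, `|zk k 0 c| <= M.
  move=> k c; have [_ [hU slt]] := hprop k.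
  have h1 := hU u uU.
  have hsk : sk k <= r + 1.
    apply: ltW; apply: lt_le_trans slt _; rewrite lerD2l invf_le1 ?ltr0n //.
    by rewrite ler1n.
  have skp : 0 < sk k by case: (hf k).
  have h2 : (A u - zk k) 0 c ^+ 2 <= (r + 1) ^+ 2.
    apply: le_trans (coord_le _ c) _; apply: le_trans h1 _.
    rewrite ler_sqr ?nnegrE //; lra.
  have h3 : `|(A u - zk k) 0 c| <= r + 1.
    by rewrite -ler_sqr ?nnegrE ?normr_ge0 //; [rewrite real_normK ?num_real //|lra].
  have h4 : `|A u 0 c| <= \sum_(c < d) `|A u 0 c|.
    by rewrite (bigD1 c) //= lerDl; apply: sumr_ge0.
  move: h3; rewrite !mxE => h3.
  have -> : zk k 0 c = A u 0 c - (A u 0 c - zk k 0 c) by ring.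
  apply: le_trans (ler_normB _ _) _.
  by rewrite /M; apply: lerD.
pose B := [set v : 'rV[R]_d | forall c, (`[- M, M]%classic : set R) (v ord0 c)].
have Bc : compact B := @rV_compact R d (fun=> `[- M, M]%classic) (fun=> @segment_compact R (- M) M).
have FB : (zk @ \oo) B.
  exists 0%N => // k _ c /=; rewrite in_itv /= -ler_norml; exact: Mb.
have [p [Bp clp]] : B `&` cluster (zk @ \oo) !=set0 by apply: Bc.

exists p; split.
  move=> i j iU jI; rewrite -subr_le0.
  apply: (cluster_le (phi := fun b => sq (A i - b) - sq (A j - b))) clp _.
    by move=> x; exact: (cvgB (@cont_sq R d (A i) x) (@cont_sq R d (A j) x)).
  exists 0%N => // k _ /=; rewrite subr_le0; case: (hprop k) => h _; exact: h.
move=> i iU; suff : enorm (A i - p) <= r by rewrite le_enorm_r.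
apply/ler_addgt0Pr => e e0.
have [k0 hk00] := ltr_add_invr e0; rewrite add0r in hk00.
rewrite le_enorm_r; last lra.
apply: (cluster_le (phi := fun b => sq (A i - b))) clp _; first exact: cont_sq.
exists k0 => // k /= hkk; have [_ [hU slt]] := hprop k.
apply: le_trans (hU i iU) _.
have skp : 0 < sk k by case: (hf k).
rewrite ler_sqr ?nnegrE; [|lra|lra].
have : k.+1%:R^-1 <= k0.+1%:R^-1 :> R.
  by rewrite lef_pV2 ?posrE ?ltr0n // ler_nat.
move=> h; apply: ltW; apply: lt_le_trans slt _; rewrite lerD2l.
by apply: le_trans h _; exact: ltW.
Qed.

End Limit.
Section Part2.
Variables (R : realType) (d n : nat) (A : 'I_n -> 'rV[R]_d).
Implicit Types (u w z : 'rV[R]_d) (s : R) (T U W V : {set 'I_n}).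

Lemma in_on_disj z s : A_in A z s :&: A_on A z s = set0.
Proof.
apply/setP => i; rewrite !inE; apply/negP => /andP[h1 /eqP h2].
by rewrite h2 ltxx in h1.
Qed.

Lemma card_in_on z s : #|A_in A z s :|: A_on A z s| = (#|A_in A z s| + #|A_on A z s|)%N.
Proof. by rewrite cardsU in_on_disj cards0 subn0. Qed.

Lemma card_rhoS_mem z s W : W \in rhoS A z s ->
  (#|A_in A z s| <= #|W| <= #|A_in A z s| + #|A_on A z s|)%N.
Proof.
rewrite mem_rhoS => /andP[h1 h2]; rewrite (subset_leq_card h1) /=.
by rewrite -card_in_on subset_leq_card.
Qed.

Lemma rhoS_of_size z s q : (#|A_in A z s| <= q <= #|A_in A z s| + #|A_on A z s|)%N ->
  exists W, W \in rhoS A z s /\ #|W| = q.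
Proof.
move=> /andP[h1 h2].
have [Q [hQ cQ]] := exists_sub_card (X := A_on A z s) (q := (q - #|A_in A z s|)%N) ltac:(lia).
exists (A_in A z s :|: Q); split.
  by rewrite mem_rhoS subsetUl setUS.
rewrite cardsU cQ.
have -> : A_in A z s :&: Q = set0.
  apply/eqP; rewrite -subset0 -(in_on_disj z s); exact: setIS.
rewrite cards0; lia.
Qed.

Lemma embed_depth W : - last_coord (embed A W) = #|W|%:R.
Proof. by rewrite /last_coord embed_rE opprK. Qed.

Lemma conv_embed (rho : {set {set 'I_n}}) W : W \in rho -> conv A rho (embed A W).
Proof.
move=> hW; exists (fun V => (V == W)%:R); split; first by move=> V _; case: (V == W).
split.
  by rewrite (bigD1 W) //= eqxx big1 ?addr0 // => V /andP[_ /negbTE ->].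
rewrite (bigD1 W) //= eqxx scale1r big1 ?addr0 // => V /andP[_ /negbTE ->].
by rewrite scale0r.
Qed.

Lemma conv_depth (rho : {set {set 'I_n}}) x (a b : nat) :
  (forall W, W \in rho -> (a <= #|W| <= b)%N) -> conv A rho x ->
  a%:R <= - last_coord x <= b%:R.
Proof.
move=> hab [lam [hl0 [hl1 ->]]].
have e : - last_coord (\sum_(W in rho) lam W *: embed A W) = \sum_(W in rho) lam W * #|W|%:R.
  rewrite /last_coord summxE -sumrN; apply: eq_bigr => W _.
  by rewrite mxE embed_rE mulrN opprK.
rewrite e; apply/andP; split.
  have ea : a%:R = \sum_(W in rho) lam W * a%:R :> R by rewrite -mulr_suml hl1 mul1r.
  rewrite [in X in X <= _]ea; apply: ler_sum => W hW.
  apply: ler_wpM2l; first exact: hl0.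
  by rewrite ler_nat; case/andP: (hab W hW).
have eb : b%:R = \sum_(W in rho) lam W * b%:R :> R by rewrite -mulr_suml hl1 mul1r.
rewrite [in X in _ <= X]eb; apply: ler_sum => W hW.
apply: ler_wpM2l; first exact: hl0.
by rewrite ler_nat; case/andP: (hab W hW).
Qed.

Lemma cell_vertex_exists z s j slab x : cellpts A (rhoS A z s) j slab x ->
  exists V, V \in rhoS A z s /\ cellpts A (rhoS A z s) j slab (embed A V).
Proof.
move=> [hx hd].
have := conv_depth (@card_rhoS_mem z s) hx => /andP[l1 l2].
set a := #|A_in A z s|; set b := (#|A_in A z s| + #|A_on A z s|)%N.
rewrite -/a -/b in l1 l2.
case: slab hd => [[d1 d2]|d1].
  have j1 : (j <= b)%N by rewrite -(ler_nat R); apply: le_trans d1 l2.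
  have j2 : (a <= j.+1)%N by rewrite -(ler_nat R); apply: le_trans l1 d2.
  case: (leqP a j) => haj.
    have [W [hW cW]] := @rhoS_of_size z s j ltac:(rewrite /a /b in haj j1 *; lia).
    exists W; split => //; split; first exact: conv_embed.
    by rewrite !embed_depth cW !ler_nat leqnn.
  exists (A_in A z s); split; first exact: A_in_rhoS.
  split; first by apply: conv_embed; exact: A_in_rhoS.
  rewrite !embed_depth.
  have -> : #|A_in A z s| = j.+1 by rewrite /a in haj j2; lia.
  by rewrite !ler_nat leqnn.
have j1 : (j <= b)%N by rewrite -(ler_nat R) -d1.
have j2 : (a <= j)%N by rewrite -(ler_nat R) -d1.
have [W [hW cW]] := @rhoS_of_size z s j ltac:(rewrite /a /b in j1 j2 *; lia).
exists W; split => //; split; first exact: conv_embed.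
by rewrite embed_depth cW.
Qed.

End Part2.
Section Part2b.
Variables (R : realType) (d n : nat) (A : 'I_n -> 'rV[R]_d).
Implicit Types (u w z : 'rV[R]_d) (s : R) (T U W V : {set 'I_n}).

Lemma finish_simplex r k (sig : {set {set 'I_n}}) i b : (k <= i)%N -> (0 < #|sig|)%N ->
  (forall T, T \in sig -> (#|T| == i) || (#|T| == i.+1)) ->
  (forall T, T \in sig -> BallVor A r T b) -> sdel_simplex A r k sig.
Proof.
move=> hki hs hsz hb; exists i; split => //; split => //; split; last by exists b.
move=> T hT; split; first exact: hsz.
by exists b; apply: hb.
Qed.

Lemma extreme_sub (C D : 'rV[R]_(d + 1) -> Prop) p :
  (forall x, C x -> D x) -> C p -> extreme D p -> extreme C p.
Proof.
move=> hCD hCp [_ h]; split => // x y t hx hy; exact: h (hCD x hx) (hCD y hy).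
Qed.

Lemma mem_cellV rho j slab V :
  V \in cellV A rho j slab -> V \in rho /\ extreme (cellpts A rho j slab) (embed A V).
Proof. by rewrite inE => /andP[h /asboolP]. Qed.

Lemma cellV_intro (hgp : general_position A) z s j slab V : 0 <= s ->
  V \in rhoS A z s -> cellpts A (rhoS A z s) j slab (embed A V) ->
  V \in cellV A (rhoS A z s) j slab.
Proof.
move=> s0 hV hc; rewrite inE hV /=; apply/asboolP.
apply: extreme_sub hc (rhoS_extreme hgp s0 hV).
by move=> x [].
Qed.

Lemma cellV_size rho j slab V : V \in cellV A rho j slab ->
  if slab then (j <= #|V| <= j.+1)%N else (#|V| == j).
Proof.
case/mem_cellV => _ [[_ hd] _]; move: hd; rewrite embed_depth.
case: slab => [[h1 h2]|/eqP].
  by rewrite -!(ler_nat R) h1 h2.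
by rewrite eqr_nat.
Qed.

Lemma part2 (hgp : general_position A) r k rho j slab :
  in_SRhomb A r k rho j slab -> sdel_simplex A r k (cellV A rho j slab).
Proof.
move=> [[[z [s [s0 erho]]] [hjn [x hx]]] [[rho' [[[z' [s' [s0' erho']]] [hcont _]] hrr]] hk]].
subst rho rho'.
have [V0 [hV0 hc0]] := cell_vertex_exists hx.
have hV0c : V0 \in cellV A (rhoS A z s) j slab by apply: cellV_intro => //; exact: ltW.
have hsub : forall V, V \in cellV A (rhoS A z s) j slab -> V \in rhoS A z' s'.
  move=> V /mem_cellV [hV [hcV _]].
  apply: (conv_rhoS_mem (ltW s0) (ltW s0') hV); exact: hcont.
have [b hb] := limit_sphere s0' hrr.
have hbV : forall T, T \in cellV A (rhoS A z s) j slab -> BallVor A r T b.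
  by move=> T hT; apply: hb; apply: hsub.
have hpos : (0 < #|cellV A (rhoS A z s) j slab|)%N by apply/card_gt0P; exists V0.
destruct slab.
  case: (boolP [exists V in cellV A (rhoS A z s) j true, #|V| == j]).
    case/exists_inP => V1 hV1 /eqP c1.
    apply: (finish_simplex (i := j)) hpos _ hbV.
      by rewrite -c1; exact: hk.
    move=> T hT; have := cellV_size hT => /= /andP[t1 t2].
    by apply/orP; rewrite !eqn_leq t1 t2 /=; lia.
  move=> hn.
  have hsz : forall T, T \in cellV A (rhoS A z s) j true -> #|T| = j.+1.
    move=> T hT; have := cellV_size hT => /= /andP[t1 t2].
    have : #|T| != j by apply: contra hn => hTj; apply/exists_inP; exists T.
    move=> /eqP hne; move: t1 t2 hne; set m := #|T|; lia.
  apply: (finish_simplex (i := j.+1)) hpos _ hbV.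
    by rewrite -(hsz V0 hV0c); exact: hk.
  by move=> T hT; rewrite hsz // eqxx.
apply: (finish_simplex (i := j)) hpos _ hbV.
  by rewrite -(eqP (cellV_size hV0c)); exact: hk.
by move=> T hT; rewrite (eqP (cellV_size hT)) eqxx.
Qed.

End Part2b.
Section Perturb.
Variables (R : realType) (d n : nat) (A : 'I_n -> 'rV[R]_d).
Implicit Types (u w z : 'rV[R]_d) (s : R) (T U W V : {set 'I_n}).

Lemma ex_pos_lb (P : pred 'I_n) (h : 'I_n -> R) :
  (forall i, P i -> 0 < h i) -> exists2 g, 0 < g & forall i, P i -> g <= h i.
Proof.
move=> hp.
suff : forall s : seq 'I_n, exists2 g, 0 < g & forall i, i \in s -> P i -> g <= h i.
  by case/(_ (index_enum 'I_n)) => g g0 hg; exists g => // i; apply: hg; rewrite mem_index_enum.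
elim => [|x s [g g0 hg]]; first by exists 1.
case Px: (P x); last first.
  exists g => // i; rewrite in_cons => /orP[/eqP -> | /hg //]; by rewrite Px.
have hx := hp x Px.
case: (ltP (h x) g) => hxg.
  exists (h x) => // i; rewrite in_cons => /orP[/eqP -> // | his Pi].
  by apply: le_trans (ltW hxg) (hg i his Pi).
exists g => // i; rewrite in_cons => /orP[/eqP -> // | his Pi].
exact: hg.
Qed.

Lemma ex_argmax (S : {set 'I_n}) (f : 'I_n -> R) a0 : a0 \in S ->
  exists2 a, a \in S & forall x, x \in S -> f x <= f a.
Proof.
move=> ha0.
suff : forall s : seq 'I_n, (0 < size s)%N -> exists2 a, a \in s & forall x, x \in s -> f x <= f a.
  case/(_ (enum S)).
    by case: (enum S) (mem_enum S a0) => //; rewrite ha0.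
  by move=> a; rewrite mem_enum => haS hmax; exists a => // x hx; apply: hmax; rewrite mem_enum.
elim => [//|x s IH] _.
case: s IH => [|y s] IH.
  by exists x; rewrite ?mem_seq1 // => x'; rewrite mem_seq1 => /eqP ->.
have [a ha hmax] := IH isT.
case: (leP (f x) (f a)) => hxa.
  exists a; first by rewrite in_cons ha orbT.
  by move=> x'; rewrite in_cons => /orP[/eqP -> // | /hmax].
exists x; first exact: mem_head.
move=> x'; rewrite in_cons => /orP[/eqP -> // | /hmax h]; by apply: le_trans h (ltW hxa).
Qed.

Lemma enormBC u w : enorm (u - w) = enorm (w - u).
Proof. by rewrite !enormE sqBC. Qed.

Lemma sq_shift u g (e : R) : sq (u - e *: g) = sq u - 2 * e * dot u g + e ^+ 2 * sq g.
Proof. by rewrite sqB dotZr /sq dotZl dotZr; ring. Qed.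

Lemma perturb (hgp : general_position A) T b r (eta : R) a0 :
  a0 \in T -> Ball A r T b -> Vor A T b -> 0 <= r -> 0 < eta ->
  exists z s, 0 < s /\ s <= r + eta /\ A_in A z s = T /\ A_on A z s = set0.
Proof.
move=> ha0 hball hvor r0 eta0.
pose q i := sq (A i - b).
have [a1 ha1 hmax] := ex_argmax q ha0.
pose mu := q a1.
have hmu0 : 0 <= mu by exact: sq_ge0.
have hmur : mu <= r ^+ 2.
  by rewrite /mu /q sqBC -le_enorm_r //; apply: hball.
have hT : forall i, i \in T -> q i <= mu by move=> i /hmax.
have hN : forall j, j \notin T -> mu <= q j.
  move=> j hj; rewrite /mu /q sqBC (sqBC (A j)) -le_enorm; exact: hvor.
pose S : {set 'I_n} := finset (fun i => q i == mu).
have hS : aff_indep A S.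
  apply: (cosph_aff hgp (z := b) (s := Num.sqrt mu)) => i; rewrite inE => /eqP hi.
  by rewrite enormE -/(q i) hi.
have [g [cc hgc]] := @aff_solve R d n A _ (fun i => if i \in T then 1 else 0) hS.
pose beta i := -2 * dot (A i - b) g.
pose kappa := -2 * (1 - cc - dot b g) + 1.
have hbS : forall i, i \in S -> beta i - kappa = if i \in T then -1 else 1.
  move=> i iS; have := hgc i iS; rewrite /beta /kappa dotBl.
  by case: (i \in T) => h; lra.
have [gap gap0 hgap] := @ex_pos_lb (fun i => i \notin S) (fun i => `|q i - mu|)
  ltac:(by move=> i; rewrite /S inE normr_gt0 subr_eq0).
pose D := \sum_i `|beta i - kappa| + 1.
have D1 : 1 <= D by rewrite lerDr; apply: sumr_ge0 => i _.
have hD : forall i, `|beta i - kappa| <= D.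
  move=> i; apply: le_trans (_ : \sum_i `|beta i - kappa| <= D); last by rewrite lerDl.
  by rewrite (bigD1 i) //= lerDl; apply: sumr_ge0.
pose K := `|kappa| + sq g + 1.
have K1 : 1 <= K by rewrite lerDr addr_ge0 // sq_ge0.
pose e := Num.min (gap / (2 * D)) (Num.min 1 (eta ^+ 2 / K)).
have D0 : 0 < D by lra.
have K0 : 0 < K by lra.
have e0 : 0 < e.
  by rewrite /e !lt_min !divr_gt0 ?ltr01 ?exprn_gt0 //; lra.
have e1 : e <= 1 by rewrite /e !ge_min lexx orbT.
have egap : e * (2 * D) <= gap.
  by rewrite -ler_pdivlMr ?mulr_gt0 // /e ge_min lexx.
have eK : e * K <= eta ^+ 2.
  by rewrite -ler_pdivlMr // /e !ge_min lexx !orbT.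
pose z := b + e *: g.
pose s2 := mu + e * kappa + e ^+ 2 * sq g.
have hqz : forall i, sq (A i - z) - s2 = (q i - mu) + e * (beta i - kappa).
  move=> i; rewrite /z opprD addrA sq_shift /s2 /q /beta; ring.
have hin : forall i, i \in T -> sq (A i - z) < s2.
  move=> i iT; rewrite -subr_lt0 hqz.
  case: (boolP (i \in S)) => iS.
    by rewrite (hbS i iS) iT; move: iS; rewrite /S inE => /eqP ->; lra.
  have h1 := hgap i iS; have h2 := hT i iT.
  have h3 : `|beta i - kappa| <= D := hD i.
  have h4 : q i - mu <= - gap by rewrite ler0_norm ?subr_le0 // in h1; lra.
  have : e * (beta i - kappa) <= e * D.
    apply: ler_wpM2l; first lra; apply: le_trans (ler_norm _) h3.
  nra.
have hout : forall j, j \notin T -> s2 < sq (A j - z).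
  move=> j jT; rewrite -subr_gt0 hqz.
  case: (boolP (j \in S)) => jS.
    by rewrite (hbS j jS) (negbTE jT); move: jS; rewrite /S inE => /eqP ->; lra.
  have h1 := hgap j jS; have h2 := hN j jT.
  have h3 : `|beta j - kappa| <= D := hD j.
  have h4 : gap <= q j - mu by move: h1; rewrite ger0_norm ?subr_ge0.
  have : - (e * D) <= e * (beta j - kappa).
    rewrite -mulrN; apply: ler_wpM2l; first lra.
    by rewrite lerNl; apply: le_trans (ler_norm _) _; rewrite normrN.
  nra.
have s2pos : 0 < s2 by apply: le_lt_trans (hin a0 ha0); exact: sq_ge0.
have s2le : s2 <= (r + eta) ^+ 2.
  have h1 : e * kappa <= e * `|kappa| by apply: ler_wpM2l; [lra|exact: ler_norm].
  have h2 : e ^+ 2 * sq g <= e * sq g.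
    by apply: ler_wpM2r; [exact: sq_ge0|rewrite expr2; nra].
  have h3 : e * (`|kappa| + sq g) <= eta ^+ 2.
    apply: le_trans eK; apply: ler_wpM2l; rewrite /K; lra.
  have h4 : r ^+ 2 + eta ^+ 2 <= (r + eta) ^+ 2.
    rewrite sqrrD; have : 0 <= r * eta by apply: mulr_ge0; lra.
    lra.
  rewrite /s2; lra.
exists z, (Num.sqrt s2); split; first by rewrite sqrtr_gt0.
have sq2 : Num.sqrt s2 ^+ 2 = s2 by rewrite sqr_sqrtr // ltW.
split.
  rewrite -(@ler_sqr _ (Num.sqrt s2)) ?nnegrE ?sqrtr_ge0 // ?sq2 //; lra.
split.
  apply/setP => i; rewrite inE lt_enorm_r ?sqrtr_ge0 // sq2.
  case: (boolP (i \in T)) => iT; first exact: hin.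
  by apply/negbTE; rewrite -leNgt ltW // hout.
apply/setP => i; rewrite inE in_set0 eq_enorm_r ?sqrtr_ge0 // sq2.
case: (boolP (i \in T)) => iT.
  by rewrite lt_eqF // hin.
by rewrite gt_eqF // hout.
Qed.

End Perturb.
Section Cube.
Variables (R : realType) (d n : nat) (A : 'I_n -> 'rV[R]_d).
Implicit Types (u w z : 'rV[R]_d) (s : R) (T U W V : {set 'I_n}).

Definition win (j : nat) (slab : bool) (V : {set 'I_n}) : bool :=
  if slab then (j <= #|V| <= j.+1)%N else (#|V| == j).

Lemma win_cellpts (rho : {set {set 'I_n}}) j slab V : V \in rho -> win j slab V ->
  cellpts A rho j slab (embed A V).
Proof.
move=> hV hw; split; first exact: conv_embed.
rewrite embed_depth; move: hw; rewrite /win; case: slab => [/andP[h1 h2]|/eqP ->] //.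
by rewrite !ler_nat h1 h2.
Qed.

Lemma rrad_le z s : 0 < s -> rrad A (rhoS A z s) <= s.
Proof.
move=> s0; apply: ge_inf; last by exists z.
by exists 0 => x [z' [x0 _]]; exact: ltW.
Qed.

Lemma cube_cell (hgp : general_position A) r k z s j slab : 0 < s -> rrad A (rhoS A z s) <= r -> (j <= n)%N ->
  (exists2 V0, V0 \in rhoS A z s & win j slab V0) ->
  (forall o, o \in A_on A z s -> exists2 V, V \in rhoS A z s & win j slab V && (o \in V)) ->
  (forall o, o \in A_on A z s -> exists2 V, V \in rhoS A z s & win j slab V && (o \notin V)) ->
  (forall V, V \in rhoS A z s -> win j slab V -> (k <= #|V|)%N) ->
  in_SRhomb A r k (rhoS A z s) j slab /\
  (forall V, V \in rhoS A z s -> win j slab V -> V \in cellV A (rhoS A z s) j slab).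
Proof.
move=> s0 sr hjn [V0 hV0 hw0] hcont havoid hk.
have hcell : forall V, V \in rhoS A z s -> win j slab V -> V \in cellV A (rhoS A z s) j slab.
  move=> V hV hw; apply: cellV_intro => //; first exact: ltW.
  exact: win_cellpts.
split => //.
split.
  split; first by exists z, s.
  split => //; exists (embed A V0); exact: win_cellpts.
split.
  exists (rhoS A z s); split; last exact: sr.
  split; first by exists z, s.
  split; first by move=> x [].
  move=> rho'' [z2 [s2 [s20 e2]]] hc2; subst rho''.
  have hin2 : forall V, V \in rhoS A z s -> win j slab V -> V \in rhoS A z2 s2.
    move=> V hV hw; apply: (conv_rhoS_mem (ltW s0) (ltW s20) hV).
    by apply: hc2; exact: win_cellpts.
  apply: subset_leq_card; apply/subsetP => W hW.
  have hV0' := hin2 V0 hV0 hw0.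
  move: (hV0) (hV0') hW; rewrite !mem_rhoS => /andP[a1 a2] /andP[b1 b2] /andP[c1 c2].
  apply/andP; split.
    apply/subsetP => x xI2.
    have xV0 : x \in V0 := subsetP b1 x xI2.
    have := subsetP a2 x xV0; rewrite in_setU => /orP[xI|xO].
      exact: subsetP c1 x xI.
    have [V hV /andP[hw xV]] := havoid x xO.
    have := hin2 V hV hw; rewrite mem_rhoS => /andP[e1 _].
    by rewrite (subsetP e1 x xI2) in xV.
  apply/subsetP => x xW.
  have := subsetP c2 x xW; rewrite in_setU => /orP[xI|xO].
    by apply: (subsetP b2); apply: (subsetP a1).
  have [V hV /andP[hw xV]] := hcont x xO.
  have := hin2 V hV hw; rewrite mem_rhoS => /andP[_ e2].
  exact: subsetP e2 x xV.
move=> V /mem_cellV [hV [[hconv hd] _]].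
apply: hk => //.
move: hd; rewrite embed_depth /win; case: (slab) => [[h1 h2]|h].
  by rewrite -!(ler_nat R) h1 h2.
by rewrite -(eqr_nat R); apply/eqP.
Qed.

End Cube.
Section Part3.
Variables (R : realType) (d n : nat) (A : 'I_n -> 'rV[R]_d).
Implicit Types (u w z : 'rV[R]_d) (s : R) (T U W V : {set 'I_n}).

Lemma card_IQ z s (Q : {set 'I_n}) : Q \subset A_on A z s -> #|A_in A z s :|: Q| = (#|A_in A z s| + #|Q|)%N.
Proof.
move=> hQ; rewrite cardsU.
have -> : A_in A z s :&: Q = set0.
  apply/eqP; rewrite -subset0 -(in_on_disj A z s); exact: setIS.
by rewrite cards0 subn0.
Qed.

Lemma IQ_mem z s (Q : {set 'I_n}) : Q \subset A_on A z s -> A_in A z s :|: Q \in rhoS A z s.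
Proof. by move=> hQ; rewrite mem_rhoS subsetUl setUS. Qed.

Lemma rhoS_with z s o q : o \in A_on A z s -> (1 <= q <= #|A_on A z s|)%N ->
  exists2 V, V \in rhoS A z s & (o \in V) && (#|V| == #|A_in A z s| + q)%N.
Proof.
move=> ho /andP[q1 q2].
have cD : #|A_on A z s| = (#|A_on A z s :\ o|).+1 by rewrite (cardsD1 o) ho.
move: cD; set m1 := #|A_on A z s|; set m2 := #|A_on A z s :\ o| => cD.
have [Q' [hQ' cQ']] := exists_sub_card (X := A_on A z s :\ o) (q := q.-1) ltac:(lia).
have hQ : o |: Q' \subset A_on A z s.
  rewrite subUset sub1set ho /=; apply: subset_trans hQ' _; exact: subsetDl.
exists (A_in A z s :|: (o |: Q')); first exact: IQ_mem.
rewrite in_setU in_setU1 eqxx orbT /= card_IQ // cardsU1.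
have -> : o \notin Q' by apply/negP => /(subsetP hQ'); rewrite in_setD1 eqxx.
rewrite cQ' add1n prednK // .
Qed.

Lemma rhoS_without z s o q : o \in A_on A z s -> (q < #|A_on A z s|)%N ->
  exists2 V, V \in rhoS A z s & (o \notin V) && (#|V| == #|A_in A z s| + q)%N.
Proof.
move=> ho hq.
have cD : #|A_on A z s| = (#|A_on A z s :\ o|).+1 by rewrite (cardsD1 o) ho.
move: cD; set m1 := #|A_on A z s|; set m2 := #|A_on A z s :\ o| => cD.
have [Q [hQ cQ]] := exists_sub_card (X := A_on A z s :\ o) (q := q) ltac:(lia).
have hQ2 : Q \subset A_on A z s by apply: subset_trans hQ _; exact: subsetDl.
exists (A_in A z s :|: Q); first exact: IQ_mem.
rewrite card_IQ // cQ eqxx andbT in_setU negb_or; apply/andP; split.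
  apply/negP => hI; have : o \in A_in A z s :&: A_on A z s by rewrite in_setI hI ho.
  by rewrite in_on_disj in_set0.
by apply/negP => /(subsetP hQ); rewrite in_setD1 eqxx.
Qed.

Lemma enorm_eq0 u : enorm u = 0 -> u = 0.
Proof.
move=> h; have : sq u = 0 by rewrite -enorm_sq h expr0n.
move/eqP; rewrite /sq /dot psumr_eq0; last by move=> c _; rewrite -expr2 sqr_ge0.
move=> /allP hc; apply/rowP => c; rewrite mxE.
have := hc c (mem_index_enum _); rewrite /= -expr2 sqrf_eq0 => /eqP.
by [].
Qed.

Lemma rhoS_single z s T : A_in A z s = T -> A_on A z s = set0 -> rhoS A z s = [set T]%SET.
Proof.
move=> hI hO; apply/setP => W; rewrite mem_rhoS hO setU0 hI in_set1 eq_sym eqEsubset.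
done.
Qed.

Lemma singleton_cell (hgp : general_position A) r k T b a0 :
  a0 \in T -> BallVor A r T b -> 0 <= r -> (k <= #|T|)%N ->
  in_SRhomb A r k [set T]%SET #|T| false /\ T \in cellV A [set T]%SET #|T| false.
Proof.
move=> ha0 [hball hvor] r0 hkT.
have [z [s [s0 [_ [hI hO]]]]] := perturb hgp ha0 hball hvor r0 ltr01.
have e := rhoS_single hI hO.
have hrr : rrad A (rhoS A z s) <= r.
  rewrite e; apply/ler_addgt0Pr => eta eta0.
  have [z' [s' [s0' [hs' [hI' hO']]]]] := perturb hgp ha0 hball hvor r0 eta0.
  apply: le_trans hs'; apply: ge_inf.
    by exists 0 => x [z2 [x0 _]]; exact: ltW.
  by exists z'; split => //; exact: rhoS_single.
have hTn : (#|T| <= n)%N by rewrite -[X in (_ <= X)%N]card_ord max_card.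
have := @cube_cell R d n A hgp r k z s #|T| false s0 hrr hTn.
rewrite -e; case.
- by exists T; rewrite ?e ?in_set1 // /win eqxx.
- by move=> o; rewrite hO in_set0.
- by move=> o; rewrite hO in_set0.
- by move=> V; rewrite e in_set1 /win => /eqP ->.
move=> h1 h2; split => //; apply: h2; by rewrite ?e ?in_set1 // /win eqxx.
Qed.

End Part3.
Section Part3b.
Variables (R : realType) (d n : nat) (A : 'I_n -> 'rV[R]_d).
Implicit Types (u w z : 'rV[R]_d) (s : R) (T U W V : {set 'I_n}).

Lemma card_le_n T : (#|T| <= n)%N.
Proof. by rewrite -[X in (_ <= X)%N]card_ord max_card. Qed.

Lemma arith1 (a b i : nat) : (a.+2 <= b)%N -> (a == i) || (a == i.+1) -> (b == i) || (b == i.+1) -> False.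
Proof. by move=> h /orP[/eqP ha|/eqP ha] /orP[/eqP hb|/eqP hb]; subst; lia. Qed.

Lemma ar_w1 (a m c : nat) : (a < m)%N -> (m < a + c)%N -> (1 <= m - a <= c)%N.
Proof. move=> h1 h2; apply/andP; split; lia. Qed.
Lemma ar_w2 (a m c : nat) : (a < m)%N -> (m < a + c)%N -> (m - a < c)%N.
Proof. move=> h1 h2; lia. Qed.
Lemma ar_w3 (a i c : nat) : (a <= i)%N -> (i.+1 <= a + c)%N -> (1 <= i.+1 - a <= c)%N.
Proof. move=> h1 h2; apply/andP; split; lia. Qed.
Lemma ar_w4 (a i c : nat) : (a <= i)%N -> (i.+1 <= a + c)%N -> (i - a < c)%N.
Proof. move=> h1 h2; lia. Qed.

Lemma part3 (hgp : general_position A) (hinj : injective A) r k (sigma : {set {set 'I_n}}) :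
  0 <= r -> (0 < k)%N -> sdel_simplex A r k sigma ->
  exists (rho : {set {set 'I_n}}) (j : nat) (slab : bool),
    in_SRhomb A r k rho j slab /\ sigma \subset cellV A rho j slab.
Proof.
move=> r0 k0 [i [hki [hpos [hvert [b hb]]]]].
have hsize : forall T, T \in sigma -> (#|T| == i) || (#|T| == i.+1).
  by move=> T /hvert [].
have hTk : forall T, T \in sigma -> (k <= #|T|)%N.
  by move=> T /hsize /orP[/eqP -> | /eqP ->] //; apply: leqW.
have hTne : forall T, T \in sigma -> exists a, a \in T.
  move=> T hT; have : (0 < #|T|)%N by apply: leq_trans (hTk T hT).
  by case/card_gt0P => a ha; exists a.
have [T1 hT1] : exists T1, T1 \in sigma by case/card_gt0P: hpos => T hT; exists T.
case: (boolP [exists T2 in sigma, T2 != T1]); last first.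
  move=> hno; have [a0 ha0] := hTne T1 hT1.
  have [h1 h2] := singleton_cell hgp ha0 (hb T1 hT1) r0 (hTk T1 hT1).
  exists [set T1]%SET, #|T1|, false; split => //.
  apply/subsetP => T hT; suff -> : T = T1 by [].
  apply/eqP; apply: contraNT hno => hne; apply/exists_inP; exists T => //.
case/exists_inP => T2 hT2 hT21.
pose U : {set 'I_n} := finset (fun x => [exists T in sigma, x \in T]).
have hUin : forall T x, T \in sigma -> x \in T -> x \in U.
  by move=> T x hT hx; rewrite inE; apply/exists_inP; exists T.
have [a0 ha0] := hTne T1 hT1.
have [as_ has hmax] := ex_argmax (fun x => enorm (b - A x)) (hUin T1 a0 hT1 ha0).
move: has; rewrite inE => /exists_inP [T' hT' haT'].
pose s := enorm (b - A as_).
have hle : forall T x, T \in sigma -> x \in T -> enorm (A x - b) <= s.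
  by move=> T x hT hx; rewrite enormBC; apply: hmax; exact: hUin T x hT hx.
have hmem : forall T, T \in sigma -> T \in rhoS A b s.
  move=> T hT; rewrite mem_rhoS; apply/andP; split.
    apply/subsetP => c; rewrite inE => hc.
    apply/negPn/negP => hcT.
    have hvT' : forall x, enorm (A x - b) < s -> x \in T'.
      move=> x hx; apply/negPn/negP => hxT'.
      have := (hb T' hT').2 as_ x haT' hxT'.
      by rewrite -/s enormBC leNgt hx.
    have hTlt : forall t, t \in T -> enorm (A t - b) < s.
      move=> t ht; apply: le_lt_trans hc; rewrite !(enormBC (A _)).
      exact: (hb T hT).2.
    have hsub : T \subset (T' :\ as_) :\ c.
      apply/subsetP => t ht; rewrite !in_setD1; apply/andP; split.
        by apply/negP => /eqP htc; rewrite -htc ht in hcT.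
      apply/andP; split; last exact: hvT' (hTlt t ht).
      by apply/negP => /eqP hta; have := hTlt t ht; rewrite hta enormBC ltxx.
    have h3 := subset_leq_card hsub.
    have c1 : #|T'| = (#|T' :\ as_|).+1 by rewrite (cardsD1 as_) haT'.
    have c2 : #|T' :\ as_| = (#|(T' :\ as_) :\ c|).+1.
      rewrite (cardsD1 c) in_setD1 (hvT' c hc) andbT.
      suff -> : (c != as_) by [].
      by apply/negP => /eqP hca; move: hc; rewrite hca enormBC ltxx.
    apply: (arith1 (a := #|T|) (b := #|T'|) (i := i)); last exact: hsize.
      by rewrite c1 c2 !ltnS.
    exact: hsize.
  apply/subsetP => x hx; rewrite in_setU !inE.
  by rewrite orbC -le_eqVlt; exact: hle T x hT hx.
have s0 : 0 < s.
  rewrite lt_neqAle enorm_ge0 andbT; apply/negP => /eqP hs0.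
  have hpt : forall T x, T \in sigma -> x \in T -> x = as_.
    move=> T x hT hx; apply: hinj.
    have := hle T x hT hx; rewrite -hs0 => h.
    have hx0 : enorm (A x - b) = 0 by apply/eqP; rewrite eq_le h enorm_ge0.
    have ha0' : enorm (b - A as_) = 0 by rewrite hs0.
    move/enorm_eq0/eqP: hx0; rewrite subr_eq0 => /eqP ->.
    by move/enorm_eq0/eqP: ha0'; rewrite subr_eq0 => /eqP ->.
  have hT1e : T1 = [set as_]%SET.
    apply/setP => x; rewrite in_set1; apply/idP/eqP => [hx|->]; first exact: hpt T1 x hT1 hx.
    by have := hpt T1 a0 hT1 ha0 => <-.
  have [a2 ha2] := hTne T2 hT2.
  have hT2e : T2 = [set as_]%SET.
    apply/setP => x; rewrite in_set1; apply/idP/eqP => [hx|->]; first exact: hpt T2 x hT2 hx.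
    by have := hpt T2 a2 hT2 ha2 => <-.
  by rewrite hT1e hT2e eqxx in hT21.
have hsr : rrad A (rhoS A b s) <= r.
  apply: le_trans (rrad_le A b s0) _.
  by rewrite /s; exact: (hb T' hT').1 as_ haT'.
set I := A_in A b s; set O := A_on A b s.
have hcard : forall T, T \in sigma -> (#|I| <= #|T| <= #|I| + #|O|)%N.
  by move=> T hT; exact: card_rhoS_mem (hmem T hT).
have hlow : forall T, T \in sigma -> #|T| = #|I| -> T = I.
  move=> T hT hc; move: (hmem T hT); rewrite mem_rhoS => /andP[h1 _].
  by apply/esym/eqP; rewrite eqEcard h1 hc leqnn.
have hhigh : forall T, T \in sigma -> #|T| = (#|I| + #|O|)%N -> T = I :|: O.
  move=> T hT hc; move: (hmem T hT); rewrite mem_rhoS => /andP[_ h2].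
  by apply/eqP; rewrite eqEcard h2 /= card_in_on hc leqnn.
case: (boolP [forall T in sigma, #|T| == #|T1|]) => hall.
  have hallT : forall T, T \in sigma -> #|T| = #|T1|.
    by move=> T hT; apply/eqP; move/forall_inP: hall; apply.
  have hm1 : (#|I| < #|T1|)%N.
    have := hcard T1 hT1; case/andP => h1 _; rewrite leq_eqVlt in h1.
    case/orP: h1 => [/eqP h1|//]; exfalso.
    have e1 := hlow T1 hT1 (esym h1).
    have e2 := hlow T2 hT2 (etrans (hallT T2 hT2) (esym h1)).
    by rewrite e1 e2 eqxx in hT21.
  have hm2 : (#|T1| < #|I| + #|O|)%N.
    have := hcard T1 hT1; case/andP => _ h1; rewrite leq_eqVlt in h1.
    case/orP: h1 => [/eqP h1|//]; exfalso.
    have e1 := hhigh T1 hT1 h1.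
    have e2 := hhigh T2 hT2 (etrans (hallT T2 hT2) h1).
    by rewrite e1 e2 eqxx in hT21.
  have := @cube_cell R d n A hgp r k b s #|T1| false s0 hsr (card_le_n _).
  case.
  - by exists T1; [exact: hmem|rewrite /win eqxx].
  - move=> o ho; have [V hV /andP[oV /eqP cV]] :=
      @rhoS_with R d n A b s o (#|T1| - #|I|)%N ho (ar_w1 hm1 hm2).
    exists V => //; rewrite oV andbT /win cV subnKC //; exact: ltnW.
  - move=> o ho; have [V hV /andP[oV /eqP cV]] :=
      @rhoS_without R d n A b s o (#|T1| - #|I|)%N ho (ar_w2 hm1 hm2).
    exists V => //; rewrite oV andbT /win cV subnKC //; exact: ltnW.
  - by move=> V _; rewrite /win => /eqP ->; exact: hTk.
  move=> h1 h2; exists (rhoS A b s), #|T1|, false; split => //.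
  apply/subsetP => T hT; apply: h2; first exact: hmem.
  by rewrite /win hallT.
have [Ta hTa cTa] : exists2 Ta, Ta \in sigma & #|Ta| = i.
  case/forall_inPn: hall => T hT hneq.
  have := hsize T hT; have := hsize T1 hT1.
  case/orP => /eqP h1; case/orP => /eqP h2.
  - by rewrite h1 h2 eqxx in hneq.
  - by exists T1.
  - by exists T.
  - by rewrite h1 h2 eqxx in hneq.
have [Tb hTb cTb] : exists2 Tb, Tb \in sigma & #|Tb| = i.+1.
  case/forall_inPn: hall => T hT hneq.
  have := hsize T hT; have := hsize T1 hT1.
  case/orP => /eqP h1; case/orP => /eqP h2.
  - by rewrite h1 h2 eqxx in hneq.
  - by exists T.
  - by exists T1.
  - by rewrite h1 h2 eqxx in hneq.
have /andP[ha1 _] := hcard Ta hTa; have /andP[_ hb2] := hcard Tb hTb.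
rewrite cTa in ha1; rewrite cTb in hb2.
have hin : (i <= n)%N by rewrite -cTa; exact: card_le_n.
have := @cube_cell R d n A hgp r k b s i true s0 hsr hin.
case.
- by exists Ta; [exact: hmem|rewrite /win cTa leqnn leqnSn].
- move=> o ho; have [V hV /andP[oV /eqP cV]] :=
    @rhoS_with R d n A b s o (i.+1 - #|I|)%N ho (ar_w3 ha1 hb2).
  exists V => //; rewrite oV andbT /win cV subnKC ?leqnn ?leqnSn //; exact: leqW.
- move=> o ho; have [V hV /andP[oV /eqP cV]] :=
    @rhoS_without R d n A b s o (i - #|I|)%N ho (ar_w4 ha1 hb2).
  exists V => //; rewrite oV andbT /win cV subnKC ?leqnn ?leqnSn //.
- by move=> V _; rewrite /win => /andP[h1 _]; apply: leq_trans h1.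
move=> h1 h2; exists (rhoS A b s), i, true; split => //.
apply/subsetP => T hT; apply: h2; first exact: hmem.
rewrite /win; have := hsize T hT; case/orP => /eqP ->; by rewrite ?leqnn ?leqnSn ?ltnW.
Qed.

End Part3b.

Theorem lemma7 (R : realType) (d n : nat) (A : 'I_n -> 'rV[R]_d)
  (hd : (0 < d)%N) (hinj : injective A) (hgp : general_position A)
  (r : R) (k : nat) (hr : 0 <= r) (hk : (0 < k)%N) :
  (forall v : {set 'I_n}, srhomb_vertex A r k v <-> sdel_vertex A r k v) /\
  (forall (rho : {set {set 'I_n}}) (j : nat) (slab : bool),
     in_SRhomb A r k rho j slab -> sdel_simplex A r k (cellV A rho j slab)) /\
  (forall sigma : {set {set 'I_n}}, sdel_simplex A r k sigma ->
     exists (rho : {set {set 'I_n}}) (j : nat) (slab : bool),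
       in_SRhomb A r k rho j slab /\ sigma \subset cellV A rho j slab).
Proof.
split; last split.
- move=> v; split.
    move=> [rho [j [slab [hin hv]]]].
    have [i [hki [_ [hvert _]]]] := part2 hgp hin.
    by exists i; split => //; apply: hvert.
  move=> [i [hki [hsz [b hb]]]].
  have hs : sdel_simplex A r k [set v]%SET.
    exists i; split => //; split; first by rewrite cards1.
    split; first by move=> T; rewrite in_set1 => /eqP ->; split => //; exists b.
    by exists b => T; rewrite in_set1 => /eqP ->.
  have [rho [j [slab [hin hsub]]]] := part3 hgp hinj hr hk hs.
  exists rho, j, slab; split => //.
  by apply: (subsetP hsub); rewrite in_set1.
- by move=> rho j slab hin; exact: (part2 hgp hin).
- by move=> sigma hs; exact: (part3 hgp hinj hr hk hs).
Qed.
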